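(* $$\max_{U_1,U_2\in\mathcal R}P(U_1,U_2)=\frac{3}{50}\left(9+\sqrt6\right)=0.004\left(\sqrt{393-48\sqrt6}+138+7\sqrt6\right)\approx 0.687.$$
   Context: Basis of $\mathbb C^3$: $|1\rangle,|2\rangle,|3\rangle$ (standard basis). Spin-1 matrices in this basis: $J_y=\frac{1}{\sqrt2}\begin{pmatrix}0&-i&0\\ i&0&-i\\ 0&i&0\end{pmatrix}$, $J_z=\mathrm{diag}(1,0,-1)$. Define $Z(\alpha,\beta,\gamma)=e^{-i\alpha J_z}e^{-i\beta J_y}e^{-i\gamma J_z}$. Let $\mathcal R=\{Z(\alpha,\beta,\gamma):\alpha,\beta,\gamma\in\mathbb R\}\subset U(3)$. For $j\in\{1,2\}$ let $P_j=|j\rangle\langle j|$ and $\mathcal M_j(\rho)=P_j\rho P_j+(\mathbb I-P_j)\rho(\mathbb I-P_j)$. Define $P(U_1,U_2)=\langle 2|U_2\,\mathcal M_1(U_1|1\rangle\langle 1|U_1^\dagger)\,U_2^\dagger|2\rangle$ for $U_1,U_2\in\mathcal R$. *)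

(* Defs.v *)
From HB Require Import structures.
From mathcomp Require Import all_boot all_order all_algebra.
From mathcomp Require Import reals topology normedtype sequences Rstruct Rstruct_topology.
From mathcomp Require Import complex.

Set Implicit Arguments.
Unset Strict Implicit.
Unset Printing Implicit Defensive.

Import Order.TTheory GRing.Theory Num.Theory.
Local Open Scope ring_scope.
Local Open Scope complex_scope.

Notation RR := Rdefinitions.R.
Notation CC := (complex RR).

(* Matrix exponential, defined by its power series
   exp M = sum_k M^k / k!, the limit being taken entrywise and
   (as for any limit in C = R^2) on real and imaginary parts. *)
Definition expm_psum (M : 'M[CC]_3) (N : nat) : 'M[CC]_3 :=
  \sum_(k < N) ((k`!)%:R)^-1 *: (M ^+ k).

Definition expm (M : 'M[CC]_3) : 'M[CC]_3 :=
  \matrix_(i, j)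
    ((limn (fun N => @complex.Re RR (expm_psum M N i j)))
       +i* (limn (fun N => @complex.Im RR (expm_psum M N i j)))).

(* Standard basis |1>,|2>,|3>  ~  indices 0,1,2 of 'I_3. *)
Definition e1 : 'I_3 := @Ordinal 3 0 erefl.
Definition e2 : 'I_3 := @Ordinal 3 1 erefl.
Definition e3 : 'I_3 := @Ordinal 3 2 erefl.

Definition inv_sqrt2 : CC := ((Num.sqrt (2 : RR))^-1)%:C.

Definition Jy : 'M[CC]_3 :=
  inv_sqrt2 *: \matrix_(i < 3, j < 3)
    (if (val i == 0%N) && (val j == 1%N) then - 'i
     else if (val i == 1%N) && (val j == 0%N) then 'i
     else if (val i == 1%N) && (val j == 2%N) then - 'i
     else if (val i == 2%N) && (val j == 1%N) then 'i
     else 0).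

Definition Jz : 'M[CC]_3 :=
  \matrix_(i < 3, j < 3)
    (if (val i == 0%N) && (val j == 0%N) then 1
     else if (val i == 2%N) && (val j == 2%N) then -1
     else 0).

Definition Zrot (a b g : RR) : 'M[CC]_3 :=
  expm ((- 'i * a%:C) *: Jz) *m expm ((- 'i * b%:C) *: Jy)
    *m expm ((- 'i * g%:C) *: Jz).

Definition in_calR (U : 'M[CC]_3) : Prop :=
  exists a b g : RR, U = Zrot a b g.

Definition adj (A : 'M[CC]_3) : 'M[CC]_3 := (map_mx (@conjc RR) A)^T.

Definition proj (j : 'I_3) : 'M[CC]_3 :=
  \matrix_(k < 3, l < 3) (if (k == j) && (l == j) then 1 else 0).

Definition Mchan (j : 'I_3) (rho : 'M[CC]_3) : 'M[CC]_3 :=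
  proj j *m rho *m proj j + (1%:M - proj j) *m rho *m (1%:M - proj j).

Definition Pval (U1 U2 : 'M[CC]_3) : CC :=
  (U2 *m Mchan e1 (U1 *m proj e1 *m adj U1) *m adj U2) e2 e2.

(* Main.v *)
Require Import Defs.
From HB Require Import structures.
From mathcomp Require Import all_boot all_order all_algebra.
From mathcomp Require Import reals topology normedtype sequences Rstruct Rstruct_topology.
From mathcomp Require Import complex.
From mathcomp Require Import trigo interval.
From mathcomp Require Import boolp classical_sets functions.
From mathcomp.algebra_tactics Require Import ring lra.
Import Order.TTheory GRing.Theory Num.Theory.
Local Open Scope ring_scope.
Local Open Scope complex_scope.
Local Open Scope classical_set_scope.

Lemma half_S_odd k : odd k -> k.-1./2 = k./2.
Proof. case: k => //= k ok. rewrite uphalf_half. move: ok; case: (odd k) => //=. Qed.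

Lemma powNi k : (- 'i : CC) ^+ k = (if odd k then - 'i else 1) * ((-1) ^+ k./2)%:C.
Proof.
elim: k => [|k IH]; first by rewrite /= expr0 mul1r.
rewrite exprSr IH /=; case ok: (odd k) => /=.
- rewrite uphalf_half ok exprS rmorphM /= rmorphN1.
  have hi : ('i : CC) * 'i = -1 by rewrite -expr2 (@sqr_i RR).
  rewrite mul1r. transitivity ((('i : CC) * 'i) * ((-1) ^+ k./2)%:C); first by ring.
  by rewrite hi.
- rewrite uphalf_half ok /= add0n mul1r; ring.
Qed.

Lemma powM3 (M : 'M[CC]_3) k : M * M * M = M ->
  M ^+ k = if k == 0%N then 1 else if odd k then M else M * M.
Proof.
move=> h3; elim: k => [|k IH] //=.
rewrite exprS IH; case: k IH => [|k] IH /=; first by rewrite mulr1.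
by case: (odd k) => //=; rewrite mulrA.
Qed.

Definition so (t : CC) N := \sum_(k < N) (odd k)%:R * t ^+ k / (k`!)%:R.
Definition co (t : CC) N := \sum_(k < N) (~~ odd k)%:R * t ^+ k / (k`!)%:R.

Lemma psum_entry (M : 'M[CC]_3) (t : CC) N i j : M * M * M = M ->
  expm_psum (t *: M) N i j = (0 < N)%:R * (1 - M * M) i j + so t N * M i j
     + co t N * (M * M) i j.
Proof.
move=> h3; elim: N => [|N IH].
  by rewrite /expm_psum /so /co !big_ord0 mxE ltnn /= mulr0n !mul0r !addr0.
rewrite /expm_psum /so /co in IH *; rewrite !big_ord_recr /= mxE IH.
rewrite !mxE exprZn (powM3 _ _ h3).
case: N IH => [|N] IH /=.
  by rewrite !big_ord0 !mxE /= fact0 invr1 !expr0; ring.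
case: (odd N) => /=; rewrite !mxE; ring.
Qed.

Lemma so_sin (b : RR) N : so (- 'i * b%:C) N = - 'i * (series (sin_coeff b) N)%:C.
Proof.
rewrite /so seriesEord /= rmorph_sum mulr_sumr; apply: eq_bigr => k _.
rewrite /sin_coeff /= exprMn powNi.
case ok: (odd k) => /=.
  rewrite (half_S_odd _ ok) !rmorphM /= fmorphV /= !rmorphXn /= rmorphN1 !rmorph_nat /=.
  by ring.
by rewrite !mulr0n !mul0r rmorph0 mulr0.
Qed.

Lemma co_cos (b : RR) N : co (- 'i * b%:C) N = (series (cos_coeff b) N)%:C.
Proof.
rewrite /co seriesEord /= rmorph_sum; apply: eq_bigr => k _.
rewrite /cos_coeff /= exprMn powNi.
case ok: (odd k) => /=.
  by rewrite !mulr0n !mul0r rmorph0.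
rewrite !rmorphM /= fmorphV /= !rmorphXn /= rmorphN1 !rmorph_nat /=.
by ring.
Qed.

Import numFieldNormedType.Exports.

Lemma lim_aux (R : realType) (s c : nat -> R) (s0 c0 A B C : R) :
  s @ \oo --> s0 -> c @ \oo --> c0 ->
  limn (fun N => (0 < N)%:R * A + s N * B + c N * C) = A + s0 * B + c0 * C.
Proof.
move=> hs hc; apply: cvg_lim => //.
rewrite -cvg_shiftS.
have hs1 : (fun n => s n.+1) @ \oo --> s0 by rewrite (cvg_shiftS s).
have hc1 : (fun n => c n.+1) @ \oo --> c0 by rewrite (cvg_shiftS c).
have h1 : (fun n => s n.+1 * B) @ \oo --> s0 * B by apply: cvgMl.
have h2 : (fun n => c n.+1 * C) @ \oo --> c0 * C by apply: cvgMl.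
have h0 : (fun n => A + s n.+1 * B) @ \oo --> A + s0 * B.
  by apply: cvgD => //; exact: cvg_cst.
have h3 : (fun n => A + s n.+1 * B + c n.+1 * C) @ \oo --> A + s0 * B + c0 * C.
  by apply: cvgD.
have E : [sequence (0 < n.+1)%:R * A + s n.+1 * B + c n.+1 * C]_n =
  (fun n => A + s n.+1 * B + c n.+1 * C) by apply: boolp.funext => n /=; rewrite mul1r.
by rewrite E; exact: h3.
Qed.

Lemma lim_trig (R : realType) (b A B C : R) :
  limn (fun N => (0 < N)%:R * A + series (sin_coeff b) N * B + series (cos_coeff b) N * C)
  = A + sin b * B + cos b * C.
Proof.
apply: lim_aux.
- rewrite unlock; exact: is_cvg_series_sin_coeff.
- rewrite unlock; exact: is_cvg_series_cos_coeff.
Qed.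

Notation cRe := (@complex.Re RR).
Notation cIm := (@complex.Im RR).

Lemma Re_form (q s c : RR) (K0 K1 K2 : CC) :
  cRe (q%:C * K0 + (- 'i * s%:C) * K1 + c%:C * K2) = q * cRe K0 + s * cIm K1 + c * cRe K2.
Proof. case: K0 => a0 b0; case: K1 => a1 b1; case: K2 => a2 b2 /=; ring. Qed.

Lemma Im_form (q s c : RR) (K0 K1 K2 : CC) :
  cIm (q%:C * K0 + (- 'i * s%:C) * K1 + c%:C * K2) = q * cIm K0 + s * (- cRe K1) + c * cIm K2.
Proof. case: K0 => a0 b0; case: K1 => a1 b1; case: K2 => a2 b2 /=; ring. Qed.

Lemma fin_form (s c : RR) (K0 K1 K2 : CC) :
  (cRe K0 + s * cIm K1 + c * cRe K2) +i* (cIm K0 + s * (- cRe K1) + c * cIm K2)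
  = K0 + (- 'i * s%:C) * K1 + c%:C * K2.
Proof.
case: K0 => a0 b0; case: K1 => a1 b1; case: K2 => a2 b2 /=.
apply/eqP; rewrite eq_complex /=; apply/andP; split; apply/eqP; ring.
Qed.

Lemma expm_cube (M : 'M[CC]_3) (b : RR) : M * M * M = M ->
  expm ((- 'i * b%:C) *: M) =
  (1 - M * M) + (- 'i * (sin b)%:C) *: M + (cos b)%:C *: (M * M).
Proof.
move=> h3; apply/matrixP => i j.
rewrite /expm mxE.
have eRe : (fun N => cRe (expm_psum ((- 'i * b%:C) *: M) N i j)) =
  (fun N => (0 < N)%:R * cRe ((1 - M * M) i j) + series (sin_coeff b) N * cIm (M i j)
            + series (cos_coeff b) N * cRe ((M * M) i j)).
  apply: boolp.funext => N.
  by rewrite psum_entry // so_sin co_cos -(rmorph_nat (real_complex RR)) Re_form.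
have eIm : (fun N => cIm (expm_psum ((- 'i * b%:C) *: M) N i j)) =
  (fun N => (0 < N)%:R * cIm ((1 - M * M) i j) + series (sin_coeff b) N * (- cRe (M i j))
            + series (cos_coeff b) N * cIm ((M * M) i j)).
  apply: boolp.funext => N.
  by rewrite psum_entry // so_sin co_cos -(rmorph_nat (real_complex RR)) Im_form.
rewrite eRe eIm !lim_trig fin_form.
set M2 := M * M.
by rewrite !mxE.
Qed.

Definition Ay : 'M[CC]_3 := \matrix_(i < 3, j < 3)
    (if (val i == 0%N) && (val j == 1%N) then - 'i
     else if (val i == 1%N) && (val j == 0%N) then 'i
     else if (val i == 1%N) && (val j == 2%N) then - 'i
     else if (val i == 2%N) && (val j == 1%N) then 'i
     else 0).

Lemma Jy_def : Jy = inv_sqrt2 *: Ay. Proof. by []. Qed.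

Ltac cc_eq := apply/eqP; rewrite eq_complex /=; apply/andP; split; apply/eqP; ring.

Lemma Ay3 : Ay * Ay * Ay = 2%:R *: Ay.
Proof.
apply/matrixP => i j; rewrite !(mxE, big_ord_recl, big_ord0).
case: i => [[|[|[|?]]] ?] //; case: j => [[|[|[|?]]] ?] //=; cc_eq.
Qed.

Lemma Jz3 : Jz * Jz * Jz = Jz.
Proof.
apply/matrixP => i j; rewrite !(mxE, big_ord_recl, big_ord0).
case: i => [[|[|[|?]]] ?] //; case: j => [[|[|[|?]]] ?] //=; cc_eq.
Qed.

Lemma sc2 (k : CC) (A : 'M[CC]_3) : (k *: A) * (k *: A) = (k * k) *: (A * A).
Proof. by rewrite -scalerAl -scalerAr scalerA. Qed.

Definition ri : RR := (Num.sqrt (2 : RR))^-1.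

Lemma ri2 : ri * ri = 2^-1.
Proof. by rewrite /ri -expr2 exprVn sqr_sqrtr. Qed.

Lemma is2 : inv_sqrt2 * inv_sqrt2 = (2^-1 : RR)%:C.
Proof. by rewrite /inv_sqrt2 -rmorphM /= -/ri ri2. Qed.

Lemma Jy3 : Jy * Jy * Jy = Jy.
Proof.
rewrite Jy_def sc2 -scalerAl -scalerAr scalerA Ay3 scalerA is2.
congr (_ *: _); rewrite /inv_sqrt2 -/ri.
rewrite mulrAC (_ : (2^-1 : RR)%:C * 2 = 1) ?mul1r //.
by rewrite -(rmorph_nat (real_complex RR) 2) -rmorphM /= mulVf // pnatr_eq0.
Qed.

Definition ez (a : RR) (k : 'I_3) : CC :=
  if val k == 0%N then (cos a) +i* (- sin a)
  else if val k == 1%N then 1 else (cos a) +i* (sin a).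

Lemma expz a : expm ((- 'i * a%:C) *: Jz) =
  \matrix_(i, j) (if i == j then ez a i else 0).
Proof.
rewrite expm_cube ?Jz3 //; apply/matrixP => i j; rewrite !(mxE, big_ord_recl, big_ord0).
case: i => [[|[|[|?]]] ?] //; case: j => [[|[|[|?]]] ?] //=; cc_eq.
Qed.

Definition ey (b : RR) (i j : 'I_3) : RR :=
  let c := cos b in let s := sin b in
  if val i == 0%N then
    (if val j == 0%N then (1 + c) / 2 else if val j == 1%N then - s * ri else (1 - c) / 2)
  else if val i == 1%N then
    (if val j == 0%N then s * ri else if val j == 1%N then c else - s * ri)
  else
    (if val j == 0%N then (1 - c) / 2 else if val j == 1%N then s * ri else (1 + c) / 2).

Ltac cc_eqf := apply/eqP; rewrite eq_complex /=; apply/andP; split; apply/eqP; field; rewrite ?pnatr_eq0 //.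

Lemma expy b : expm ((- 'i * b%:C) *: Jy) = \matrix_(i, j) (ey b i j)%:C.
Proof.
rewrite expm_cube ?Jy3 // Jy_def sc2 is2 /inv_sqrt2 -/ri.
apply/matrixP => i j; rewrite !(mxE, big_ord_recl, big_ord0).
case: i => [[|[|[|?]]] ?] //; case: j => [[|[|[|?]]] ?] //=; rewrite /ey /=; cc_eqf.
Qed.

Lemma Zrot_entry a b g i j : Zrot a b g i j = ez a i * (ey b i j)%:C * ez g j.
Proof.
rewrite /Zrot expz expy expz !(mxE, big_ord_recl, big_ord0).
case: i => [[|[|[|?]]] ?] //; case: j => [[|[|[|?]]] ?] //=; rewrite /ez /ey /=; ring.
Qed.


Lemma adjE (A : 'M[CC]_3) i j : adj A i j = (A j i)^*.
Proof. by rewrite /adj !mxE. Qed.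

Lemma ord3P (k : 'I_3) : k = ord0 \/ k = lift ord0 ord0 \/ k = lift ord0 (lift ord0 ord0).
Proof.
case: k => [[|[|[|?]]] ?] //; [left|right;left|right;right]; exact: val_inj.
Qed.

Lemma e1E : e1 = ord0. Proof. exact: val_inj. Qed.
Lemma e2E : e2 = lift ord0 ord0. Proof. exact: val_inj. Qed.
Lemma e3E : e3 = lift ord0 (lift ord0 ord0). Proof. exact: val_inj. Qed.

Lemma L1 (U : 'M[CC]_3) m n : (U *m proj e1 *m adj U) m n = U m e1 * (U n e1)^*.
Proof.
rewrite !(mxE, big_ord_recl, big_ord0) /=.
rewrite e1E; ring.
Qed.

Lemma L2 (X : 'M[CC]_3) k l : Mchan e1 X k l =
  if (val k == 0%N) == (val l == 0%N) then X k l else 0.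
Proof.
case: (ord3P k) => [->|[->|->]]; case: (ord3P l) => [->|[->|->]];
rewrite /Mchan /proj !(mxE, big_ord_recl, big_ord0) /=; ring.
Qed.

Lemma Pval_formula U1 U2 : Pval U1 U2 =
  (U2 e2 e1 * U1 e1 e1) * (U2 e2 e1 * U1 e1 e1)^* +
  (U2 e2 e2 * U1 e2 e1 + U2 e2 e3 * U1 e3 e1) *
  (U2 e2 e2 * U1 e2 e1 + U2 e2 e3 * U1 e3 e1)^*.
Proof.
rewrite /Pval.
have HM := L2 (U1 *m proj e1 *m adj U1).
have HX := L1 U1.
move: (U1 *m proj e1 *m adj U1) HM HX => X HM HX.
move: (Mchan e1 X) HM => Mc HM.
rewrite !(mxE, big_ord_recl, big_ord0) !HM /= !HX.
rewrite !rmorphD !rmorphM /= e1E e2E e3E.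
ring.
Qed.

Lemma sqr_normr (x : RR) : `|x| ^+ 2 = x ^+ 2.
Proof. exact: real_normK (num_real x). Qed.

Lemma key_ineq (q c p X Y : RR) : q * q = 6 -> 0 <= q -> p ^+ 2 + c ^+ 2 = 1 ->
  X ^+ 2 + Y ^+ 2 = 1 ->
  Y ^+ 2 * (1 + c) ^+ 2 + (2 * X * p + Y * (1 - c)) ^+ 2 <= (108 + 12 * q) / 25.
Proof.
move=> hq q0 hpc hXY.
have q2 : 2 < q by nra.
have hc1 : -1 <= c by nra.
have hc2 : c <= 1 by nra.
set L := (108 + 12 * q) / 25.
have hLa : 0 < L - 4 * p ^+ 2 by rewrite /L; nra.
pose h := -4 * c ^+ 2 + (-48 + 8 * q) / 5 * c + (52 + 128 * q) / 25.
have hh : 0 <= h.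
  have -> : h = ((1 + c) * ((-288 + 168 * q) / 25) + (1 - c) * ((192 + 88 * q) / 25)) / 2
      + 4 * (1 - c) * (1 + c) by rewrite /h; field.
  have t1 : 0 <= (1 + c) * ((-288 + 168 * q) / 25) by apply: mulr_ge0; lra.
  have t2 : 0 <= (1 - c) * ((192 + 88 * q) / 25) by apply: mulr_ge0; lra.
  have t3 : 0 <= 4 * (1 - c) * (1 + c) by apply: mulr_ge0; [apply: mulr_ge0|]; lra.
  lra.
pose g := (L - 4 * p ^+ 2) * (L - 2 - 2 * c ^+ 2) - 4 * p ^+ 2 * (1 - c) ^+ 2.
pose T := 348/625 - 128/625 * q + (-192/125 - 8/125 * q) * c - 12/25 * c ^+ 2.
pose B := -4 * (L - 2 - 2 * c ^+ 2) - 4 * (1 - c) ^+ 2.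
have hg : 0 <= g.
  have -> : g = (c - (1 - q) / 5) ^+ 2 * h + (q * q - 6) * T + (p ^+ 2 + c ^+ 2 - 1) * B.
    by rewrite /g /h /T /B /L; field.
  rewrite hq hpc !subrr !mul0r !addr0.
  by apply: mulr_ge0 => //; apply: sqr_ge0.
pose E := Y ^+ 2 * (1 + c) ^+ 2 + (2 * X * p + Y * (1 - c)) ^+ 2.
have key : (L - 4 * p ^+ 2) * (L * (X ^+ 2 + Y ^+ 2) - E) =
   ((L - 4 * p ^+ 2) * X - 2 * p * (1 - c) * Y) ^+ 2 + g * Y ^+ 2.
  by rewrite /E /g; ring.
have : 0 <= (L - 4 * p ^+ 2) * (L * (X ^+ 2 + Y ^+ 2) - E).
  rewrite key; apply: addr_ge0; first exact: sqr_ge0.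
  by apply: mulr_ge0 => //; exact: sqr_ge0.
rewrite pmulr_rge0 // hXY mulr1 subr_ge0.
by rewrite /E.
Qed.

Lemma key_eq (q c p X Y : RR) : q * q = 6 -> 0 <= q -> p ^+ 2 + c ^+ 2 = 1 ->
  X ^+ 2 + Y ^+ 2 = 1 -> c = (1 - q) / 5 ->
  ((108 + 12 * q) / 25 - 4 * p ^+ 2) * X = 2 * p * (1 - c) * Y ->
  Y ^+ 2 * (1 + c) ^+ 2 + (2 * X * p + Y * (1 - c)) ^+ 2 = (108 + 12 * q) / 25.
Proof.
move=> hq q0 hpc hXY hc heig.
have q2 : 2 < q by nra.
have hc1 : -1 <= c by nra.
have hc2 : c <= 1 by nra.
set L := (108 + 12 * q) / 25.
have hLa : 0 < L - 4 * p ^+ 2 by rewrite /L; nra.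
pose h := -4 * c ^+ 2 + (-48 + 8 * q) / 5 * c + (52 + 128 * q) / 25.
pose g := (L - 4 * p ^+ 2) * (L - 2 - 2 * c ^+ 2) - 4 * p ^+ 2 * (1 - c) ^+ 2.
pose T := 348/625 - 128/625 * q + (-192/125 - 8/125 * q) * c - 12/25 * c ^+ 2.
pose B := -4 * (L - 2 - 2 * c ^+ 2) - 4 * (1 - c) ^+ 2.
have hg : g = 0.
  have -> : g = (c - (1 - q) / 5) ^+ 2 * h + (q * q - 6) * T + (p ^+ 2 + c ^+ 2 - 1) * B.
    by rewrite /g /h /T /B /L; field.
  by rewrite hq hpc -hc !subrr expr0n /= !mul0r !addr0.
pose E := Y ^+ 2 * (1 + c) ^+ 2 + (2 * X * p + Y * (1 - c)) ^+ 2.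
have key : (L - 4 * p ^+ 2) * (L * (X ^+ 2 + Y ^+ 2) - E) =
   ((L - 4 * p ^+ 2) * X - 2 * p * (1 - c) * Y) ^+ 2 + g * Y ^+ 2.
  by rewrite /E /g; ring.
move: key; rewrite heig subrr expr0n /= add0r hg mul0r hXY mulr1.
move/eqP; rewrite mulf_eq0 (gt_eqF hLa) /= subr_eq0 => /eqP ->.
by [].
Qed.

Lemma bound_real (c1 s1 c2 s2 q ri : RR) : c1 ^+ 2 + s1 ^+ 2 = 1 -> c2 ^+ 2 + s2 ^+ 2 = 1 ->
  q * q = 6 -> 0 <= q -> 0 < ri -> ri * ri = 2^-1 ->
  (`|s2 * ri| * `|(1 + c1) / 2|) ^+ 2 +
  (`|c2| * `|s1 * ri| + `|- s2 * ri| * `|(1 - c1) / 2|) ^+ 2 <= 3 / 50 * (9 + q).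
Proof.
move=> h1 h2 hq q0 r0 hr.
have hc1 : -1 <= c1 by nra.
have hc2 : c1 <= 1 by nra.
rewrite !normrM normrN (gtr0_norm r0) !(ger0_norm (_ : 0 <= 2^-1)) //.
rewrite (ger0_norm (_ : 0 <= 1 + c1)); last by lra.
rewrite (ger0_norm (_ : 0 <= 1 - c1)); last by lra.
have H1 : `|s1| ^+ 2 + c1 ^+ 2 = 1 by rewrite sqr_normr; lra.
have H2 : `|c2| ^+ 2 + `|s2| ^+ 2 = 1 by rewrite !sqr_normr; lra.
have H := key_ineq q c1 `|s1| `|c2| `|s2| hq q0 H1 H2.
have -> : (`|s2| * ri * ((1 + c1) * 2^-1)) ^+ 2 +
  (`|c2| * (`|s1| * ri) + `|s2| * ri * ((1 - c1) * 2^-1)) ^+ 2 =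
  (ri * ri) / 4 * (`|s2| ^+ 2 * (1 + c1) ^+ 2 + (2 * `|c2| * `|s1| + `|s2| * (1 - c1)) ^+ 2).
  by field.
rewrite hr.
have -> : 3 / 50 * (9 + q) = 2^-1 / 4 * ((108 + 12 * q) / 25) by field.
rewrite ler_pM2l // ?divr_gt0 ?invr_gt0 //.
all: try lra.
all: by rewrite invr_ge0.
Qed.

Lemma num_facts (q : RR) : q * q = 6 -> 0 <= q ->
  3 / 50 * (9 + q) = 4 / 1000 * (Num.sqrt (393 - 48 * q) + 138 + 7 * q) /\
  686 / 1000 < 3 / 50 * (9 + q) < 688 / 1000.
Proof.
move=> hq q0.
have q2 : 2 < q by nra.
have E : 393 - 48 * q = (8 * q - 3) ^+ 2.
  rewrite (_ : (8 * q - 3) ^+ 2 = 64 * (q * q) - 48 * q + 9); last by ring.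
  rewrite hq; ring.
split.
  rewrite E sqrtr_sqr ger0_norm; last by lra.
  by field.
apply/andP; split; nra.
Qed.

Notation normc := (@ComplexField.Normc.normc RR).

Lemma normc_ge0 (x : CC) : 0 <= normc x.
Proof. by case: x => a b /=; apply: sqrtr_ge0. Qed.

Lemma mulJ (x : CC) : x * x^* = ((normc x) ^+ 2)%:C.
Proof.
case: x => a b /=; rewrite sqr_sqrtr ?addr_ge0 ?sqr_ge0 //.
apply/eqP; rewrite eq_complex /=; apply/andP; split; apply/eqP; ring.
Qed.

Lemma normc_R (x : RR) : normc x%:C = `|x|.
Proof. by rewrite /= expr0n /= addr0 sqrtr_sqr. Qed.

Lemma normc_ez a k : normc (ez a k) = 1.
Proof.
case: (ord3P k) => [->|[->|->]]; rewrite /ez /=.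
- by rewrite sqrrN cos2Dsin2 sqrtr1.
- exact: ComplexField.Normc.normc1.
- by rewrite cos2Dsin2 sqrtr1.
Qed.

Lemma normc_Z a b g i j : normc (Zrot a b g i j) = `|ey b i j|.
Proof.
by rewrite Zrot_entry !ComplexField.Normc.normcM !normc_ez normc_R mul1r mulr1.
Qed.

Lemma ez0 k : ez 0 k = 1.
Proof.
case: (ord3P k) => [->|[->|->]]; rewrite /ez /= ?cos0 ?sin0 ?oppr0 //.
Qed.

Lemma sq6 : Num.sqrt (6 : RR) * Num.sqrt 6 = 6.
Proof. by rewrite -expr2 sqr_sqrtr. Qed.

Lemma ri_gt0 : 0 < ri.
Proof. by rewrite /ri invr_gt0 sqrtr_gt0. Qed.

Lemma upper a1 b1 g1 a2 b2 g2 :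
  Pval (Zrot a1 b1 g1) (Zrot a2 b2 g2) <= (3 / 50 * (9 + Num.sqrt 6))%:C.
Proof.
rewrite Pval_formula !mulJ -rmorphD lecR.
set z := (_ + _ * _).
have hw : normc (Zrot a2 b2 g2 e2 e1 * Zrot a1 b1 g1 e1 e1) =
   `|ey b2 e2 e1| * `|ey b1 e1 e1|.
  by rewrite ComplexField.Normc.normcM !normc_Z.
have hz : normc z <= `|ey b2 e2 e2| * `|ey b1 e2 e1| + `|ey b2 e2 e3| * `|ey b1 e3 e1|.
  apply: le_trans (le_normcD _ _) _.
  by rewrite !ComplexField.Normc.normcM !normc_Z.
have hz0 := normc_ge0 z.
rewrite hw.
set S := (X in normc z <= X) in hz.
apply: (@le_trans _ _ ((`|ey b2 e2 e1| * `|ey b1 e1 e1|) ^+ 2 + S ^+ 2)).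
  by rewrite lerD2l; nra.
rewrite /S /ey /=.
apply: bound_real; rewrite ?cos2Dsin2 ?sq6 ?sqrtr_ge0 ?ri_gt0 ?ri2 //.
Qed.


Lemma cplx_real (A B C D E F K : RR) :
  A * B * (A * B) + (C * D + E * F) * (C * D + E * F) = K ->
  (A%:C * B%:C) * (A%:C * B%:C)^* + (C%:C * D%:C + E%:C * F%:C) * (C%:C * D%:C + E%:C * F%:C)^*
  = K%:C.
Proof.
move=> <-; apply/eqP; rewrite eq_complex /=; apply/andP; split; apply/eqP; ring.
Qed.

Lemma Pval_gen a1 b1 g1 a2 b2 g2 :
  (forall k, ez a1 k = 1) -> (forall k, ez g1 k = 1) ->
  (forall k, ez a2 k = 1) -> (forall k, ez g2 k = 1) ->
  Pval (Zrot a1 b1 g1) (Zrot a2 b2 g2) =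
  (ey b2 e2 e1 * ey b1 e1 e1 * (ey b2 e2 e1 * ey b1 e1 e1) +
   (ey b2 e2 e2 * ey b1 e2 e1 + ey b2 e2 e3 * ey b1 e3 e1) *
   (ey b2 e2 e2 * ey b1 e2 e1 + ey b2 e2 e3 * ey b1 e3 e1))%:C.
Proof.
move=> h1 h2 h3 h4.
rewrite Pval_formula.
move: (Zrot a1 b1 g1) (Zrot a2 b2 g2) (Zrot_entry a1 b1 g1) (Zrot_entry a2 b2 g2) => U1 U2 HU1 HU2.
rewrite !HU1 !HU2 !h1 !h2 !h3 !h4 !mul1r !mulr1.
by apply: cplx_real.
Qed.

Lemma exist_part : exists U1 U2 : 'M[CC]_3,
  in_calR U1 /\ in_calR U2 /\ Pval U1 U2 = (3 / 50 * (9 + Num.sqrt 6))%:C.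
Proof.
set q := Num.sqrt (6 : RR).
have hq : q * q = 6 by exact: sq6.
have q0 : 0 <= q by exact: sqrtr_ge0.
have q2 : 2 < q by nra.
have q3 : q < 5 / 2 by nra.
set cs := (1 - q) / 5.
have hcs : -1 <= cs <= 1 by apply/andP; split; rewrite /cs; lra.
set b1 := acos cs.
have cb1 : cos b1 = cs by rewrite /b1 acosK // in_itv /=.
set p := Num.sqrt (1 - cs ^+ 2).
have sb1 : sin b1 = p by rewrite /b1 sin_acos.
have p0 : 0 <= p by exact: sqrtr_ge0.
have hp : p ^+ 2 + cs ^+ 2 = 1.
  rewrite /p sqr_sqrtr ?subrK // subr_ge0; rewrite /cs; nra.
set L := (108 + 12 * q) / 25.
set La := L - 4 * p ^+ 2.
have hLa : 0 < La by rewrite /La /L; nra.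
set bb := 2 * p * (1 - cs).
set N := Num.sqrt (bb ^+ 2 + La ^+ 2).
have hN2 : N ^+ 2 = bb ^+ 2 + La ^+ 2 by rewrite /N sqr_sqrtr // addr_ge0 ?sqr_ge0.
have hN : 0 < N by rewrite /N sqrtr_gt0; apply: ltr_wpDl; [exact: sqr_ge0| exact: exprn_gt0].
set X := bb / N.
set Y := La / N.
have hXY : X ^+ 2 + Y ^+ 2 = 1.
  rewrite /X /Y !expr_div_n -mulrDl -hN2 divff //.
  by rewrite expf_neq0 // gt_eqF.
have Y0 : 0 <= Y by rewrite /Y divr_ge0 // ltW.
have hX : -1 <= X <= 1 by apply/andP; split; nra.
have heig : La * X = bb * Y by rewrite /X /Y; field; rewrite gt_eqF.
set b2 := - acos X.
have cb2 : cos b2 = X by rewrite /b2 cosN acosK // in_itv /=.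
have sb2 : sin b2 = - Y.
  rewrite /b2 sinN sin_acos // -hXY addrAC subrr add0r sqrtr_sqr ger0_norm //.
clearbody b2 X Y N b1 p q.
exists (Zrot 0 b1 0), (Zrot 0 b2 0); split; first by exists 0, b1, 0.
split; first by exists 0, b2, 0.
rewrite (Pval_gen 0 b1 0 0 b2 0 ez0 ez0 ez0 ez0); congr (_%:C).
rewrite /ey /= cb1 sb1 cb2 sb2.
have E := key_eq q cs p X Y hq q0 hp hXY erefl heig.
transitivity (ri * ri / 4 * (Y ^+ 2 * (1 + cs) ^+ 2 + (2 * X * p + Y * (1 - cs)) ^+ 2)).
  by field.
by rewrite E ri2; field.
Qed.

Theorem corollary1 :
  let c : RR := 3 / 50 * (9 + Num.sqrt 6) in
  (exists U1 U2 : 'M[CC]_3,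
      in_calR U1 /\ in_calR U2 /\ Pval U1 U2 = c%:C) /\
  (forall U1 U2 : 'M[CC]_3,
      in_calR U1 -> in_calR U2 -> Pval U1 U2 <= c%:C) /\
  c = 4 / 1000 * (Num.sqrt (393 - 48 * Num.sqrt 6) + 138 + 7 * Num.sqrt 6) /\
  686 / 1000 < c < 688 / 1000.
Proof.
move=> c; split; first exact: exist_part.
split.
  move=> U1 U2 [a1 [b1 [g1 ->]]] [a2 [b2 [g2 ->]]]; exact: upper.
have [h1 h2] := num_facts (Num.sqrt 6) sq6 (sqrtr_ge0 6).
by split.
Qed.
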